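(* Let $f({\bm\alpha})=G_{\bf w}({\bm\mu}{\bm\alpha})$ on $\Delta_K$. The set $\Delta_K^*=\operatorname{argmin}_{{\bm\alpha}\in\Delta_K}f({\bm\alpha})$ is a convex polytope. Moreover, \[ g^*=\inf_{{\bm\alpha}\in\Delta_K\setminus\Delta_K^*}\ \max_{{\bm\alpha}^*\in\Delta_K^*}\frac{f({\bm\alpha})-f({\bm\alpha}^* )}{\|{\bm\alpha}-{\bm\alpha}^*\|} \] is positive.
   Context: ${\bm\mu}$ is a $D\times K$ real matrix with entries in $[0,1]$ (column $k$ is the mean cost vector of arm $k$). GGI: ${\bf w}\in[0,1]^D$ with $w_1>w_2>\dots>w_D$, $G_{\bf w}({\bf x})=\sum_{d=1}^Dw_dx_{\sigma(d)}$ with $\sigma$ a permutation sorting ${\bf x}$ in decreasing order. $\Delta_K=\{{\bm\alpha}\in\mathbb R^K:\sum_k\alpha_k=1,{\bm\alpha}\succeq0\}$; $\|\cdot\|$ is the Euclidean norm. *)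

(* Defs.v *)
From mathcomp Require Import all_boot all_order all_algebra.
From mathcomp Require Import reals.
Set Implicit Arguments. Unset Strict Implicit. Unset Printing Implicit Defensive.
Import Order.TTheory GRing.Theory Num.Theory.
Local Open Scope ring_scope.

Definition GGI (R : realType) (D : nat) (w : 'I_D -> R) (x : 'cV[R]_D) : R :=
  let s := sort (fun a b : R => b <= a) [seq x i 0 | i <- enum 'I_D] in
  \sum_(d < D) w d * nth 0 s d.

Definition simplex (R : realType) (K : nat) (a : 'cV[R]_K) : Prop :=
  (forall k, 0 <= a k 0) /\ \sum_(k < K) a k 0 = 1.

Definition enorm (R : realType) (K : nat) (a : 'cV[R]_K) : R :=
  Num.sqrt (\sum_(k < K) a k 0 ^+ 2).

Definition ggi_obj (R : realType) (D K : nat) (w : 'I_D -> R)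
  (mu : 'M[R]_(D, K)) (a : 'cV[R]_K) : R := GGI w (mu *m a).

Definition argmin_set (R : realType) (D K : nat) (w : 'I_D -> R)
  (mu : 'M[R]_(D, K)) (a : 'cV[R]_K) : Prop :=
  simplex a /\ forall b, simplex b -> ggi_obj w mu a <= ggi_obj w mu b.

Definition convex_polytope (R : realType) (K : nat) (S : 'cV[R]_K -> Prop) : Prop :=
  exists (n : nat) (P : 'I_n -> 'cV[R]_K),
    forall x, S x <-> exists l : 'I_n -> R,
      (forall i, 0 <= l i) /\ \sum_(i < n) l i = 1 /\ x = \sum_(i < n) l i *: P i.

(* Main.v *)
Require Import Defs.
From mathcomp Require Import all_boot all_order all_algebra.
From mathcomp Require Import reals.
From mathcomp Require Import ring lra zify.
From mathcomp Require Import fingroup perm.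
Set Implicit Arguments. Unset Strict Implicit. Unset Printing Implicit Defensive.
Import Order.TTheory GRing.Theory Num.Theory.
Local Open Scope ring_scope.

Section Hull.
Variable R : realFieldType.
Variable V : lmodType R.

Definition hull (I : finType) (P : I -> V) (x : V) : Prop :=
  exists l : I -> R, (forall i, 0 <= l i) /\ \sum_i l i = 1 /\ x = \sum_i l i *: P i.

Definition linf (g : V -> R) := forall a u v, g (a *: u + v) = a * g u + g v.

Lemma linf0 g : linf g -> g 0 = 0.
Proof. move=> hg; have := hg 1 0 0; rewrite scaler0 addr0 mul1r => h; lra. Qed.

Lemma linfD g : linf g -> forall u v, g (u + v) = g u + g v.
Proof. by move=> hg u v; rewrite -(scale1r u) hg mul1r scale1r. Qed.

Lemma linfZ g : linf g -> forall a u, g (a *: u) = a * g u.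
Proof. by move=> hg a u; rewrite -(addr0 (a *: u)) hg linf0 // addr0. Qed.

Lemma linf_sum g (I : finType) (l : I -> R) (v : I -> V) : linf g ->
  g (\sum_i l i *: v i) = \sum_i l i * g (v i).
Proof.
move=> hg; rewrite (big_morph g (linfD hg) (linf0 hg)).
by apply: eq_bigr => i _; rewrite linfZ.
Qed.

Lemma hull_comb (I J : finType) (P : I -> V) (Q : J -> V) x :
  (forall j, hull P (Q j)) -> hull Q x -> hull P x.
Proof.
move=> hQ [m [m0 [m1 ->]]].
have [L hL] := fin_all_exists hQ.
exists (fun i => \sum_j m j * L j i); split; [|split].
- move=> i; apply: sumr_ge0 => j _; apply: mulr_ge0 => //; by case: (hL j).
- rewrite exchange_big /=; rewrite -[RHS]m1; apply: eq_bigr => j _.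
  by rewrite -mulr_sumr; case: (hL j) => _ [-> _]; rewrite mulr1.
- under eq_bigr => j _ do rewrite (proj2 (proj2 (hL j))) scaler_sumr.
  rewrite exchange_big /=; apply: eq_bigr => i _.
  by rewrite scaler_suml; apply: eq_bigr => j _; rewrite scalerA.
Qed.

End Hull.
Section Comb.
Variable R : realFieldType.
Variable V : lmodType R.
Variable I : finType.
Variables (l g : I -> R) (p : I -> V).

Definition iP i : R := if 0 < g i then 1 else 0.
Definition iN i : R := if g i < 0 then 1 else 0.
Definition iZ i : R := if g i == 0 then 1 else 0.
Definition cA := \sum_i iP i * (l i * g i).
Definition cB := \sum_i iN i * (l i * - g i).
Definition wt (k : I + I * I) : R := match k with
  | inl i => (iN i * (1 - cA / cB) + iZ i) * l i
  | inr (i, j) => iP i * iN j * (l i * l j * (g i - g j) / cB) end.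
Definition pt (k : I + I * I) : V := match k with
  | inl i => p i
  | inr (i, j) => ((- g j) / (g i - g j)) *: p i + (g i / (g i - g j)) *: p j end.

Hypothesis l0 : forall i, 0 <= l i.
Hypothesis lg : \sum_i l i * g i <= 0.

Lemma cB_ge0 : 0 <= cB.
Proof.
apply: sumr_ge0 => i _; rewrite /iN; case: ltrgtP => h /=; rewrite ?mul0r ?mul1r //.
apply: mulr_ge0 => //; lra.
Qed.

Lemma cA_ge0 : 0 <= cA.
Proof.
apply: sumr_ge0 => i _; rewrite /iP; case: ltrgtP => h /=; rewrite ?mul0r ?mul1r //.
apply: mulr_ge0 => //; lra.
Qed.

Lemma cAB : cA <= cB.
Proof.
have : \sum_i l i * g i = cA - cB.
  rewrite /cA /cB -sumrB; apply: eq_bigr => i _.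
  rewrite /iP /iN; case: ltrgtP => h /=; [ring|ring|rewrite -h; ring].
by move=> h; rewrite -subr_le0 -h.
Qed.

Lemma cB0 : cB = 0 -> forall i, 0 < g i -> l i = 0.
Proof.
move=> hB i hi.
have hA : cA = 0 by have := cAB; have := cA_ge0; lra.
have h0 : forall i, true -> 0 <= iP i * (l i * g i).
  move=> k _; rewrite /iP; case: ltrgtP => h /=; rewrite ?mul0r ?mul1r //.
  apply: mulr_ge0 => //; lra.
have := @psumr_eq0P _ _ _ _ h0 hA i isT.
rewrite /iP hi mul1r => /eqP; rewrite mulf_eq0 => /orP [/eqP //|/eqP h].
by move: hi; rewrite h ltxx.
Qed.

Lemma wt_ge0 k : 0 <= wt k.
Proof.
have hAB : 0 <= 1 - cA / cB.
  have := cB_ge0; rewrite le_eqVlt => /orP [/eqP <-|hB].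
    by rewrite invr0 mulr0 subr0.
  by rewrite subr_ge0 ler_pdivrMr // mul1r cAB.
case: k => [i|[i j]] /=.
  rewrite /iN /iZ; case: ltrgtP => h /=; rewrite ?mul0r ?mul1r ?add0r ?addr0 ?mul0r ?mul1r //.
  by apply: mulr_ge0.
rewrite /iP /iN; case: (ltrgtP (g i) 0) => hi /=; rewrite ?mul0r //;
  case: (ltrgtP (g j) 0) => hj /=; rewrite ?mulr0 ?mul0r //.
rewrite !mul1r; apply: mulr_ge0; last by rewrite invr_ge0 cB_ge0.
apply: mulr_ge0; [apply: mulr_ge0; apply: l0|lra].
Qed.

Lemma wt_comb : \sum_k wt k *: pt k = \sum_i l i *: p i.
Proof.
rewrite big_sumType /=.
transitivity (\sum_i wt (inl i) *: p i + \sum_i \sum_j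
  (iP i * iN j * (l i * l j / cB)) *: ((- g j) *: p i + g i *: p j)).
  congr (_ + _); rewrite pair_big; apply: eq_bigr => -[i j] _ /=.
  rewrite /iP /iN; case: (ltrgtP (g i) 0) => hi /=; rewrite ?mul0r ?scale0r //;
  case: (ltrgtP (g j) 0) => hj /=; rewrite ?mulr0 ?mul0r ?scale0r //.
  rewrite !scalerDr !scalerA; congr (_ *: _ + _ *: _); (have [->|hB] := eqVneq cB 0; [rewrite invr0; ring|field; rewrite hB /= subr_eq0; apply/negP => /eqP e; lra]).
set c := fun i j => iP i * iN j * (l i * l j / cB).
have -> : \sum_i \sum_j c i j *: (- g j *: p i + g i *: p j) =
   \sum_i (\sum_j c i j * - g j) *: p i + \sum_j (\sum_i c i j * g i) *: p j.
  under [X in _ = X + _]eq_bigr do rewrite scaler_suml.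
  under [X in _ = _ + X]eq_bigr do rewrite scaler_suml.
  rewrite [X in _ = _ + X]exchange_big -big_split /=; apply: eq_bigr => i _.
  rewrite -big_split; apply: eq_bigr => j _ /=; by rewrite scalerDr !scalerA.
have E1 : forall i, \sum_j c i j * - g j = iP i * l i / cB * cB.
  move=> i; rewrite [X in _ = _ * X]/cB mulr_sumr; apply: eq_bigr => j _; rewrite /c; ring.
have E2 : forall j, \sum_i c i j * g i = iN j * l j / cB * cA.
  move=> j; rewrite [X in _ = _ * X]/cA mulr_sumr; apply: eq_bigr => i _; rewrite /c; ring.
under [X in _ + (X + _)]eq_bigr => i _ do rewrite E1.
under [X in _ + (_ + X)]eq_bigr => i _ do rewrite E2.
rewrite -!big_split /=; apply: eq_bigr => i _; rewrite -!scalerDl; congr (_ *: _).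
rewrite /iP /iN /iZ; case: ltrgtP => h /=.
- have [hB|hB] := eqVneq cB 0; first by rewrite hB invr0; ring.
  by field.
- have [hB|hB] := eqVneq cB 0; first by rewrite (cB0 hB h); ring.
  by field.
- ring.
Qed.

Lemma wt_valid k : ~~ (match k with inl i => g i <= 0 | inr (i, j) => (0 < g i) && (g j < 0) end) -> wt k = 0.
Proof.
case: k => [i|[i j]] /=.
  by rewrite -ltNge => h; rewrite /iN /iZ (lt_gtF h) (gt_eqF h) mul0r add0r mul0r.
rewrite negb_and /iP /iN => /orP [/negbTE ->|/negbTE ->] /=.
  by rewrite !mul0r.
by rewrite mulr0 !mul0r.
Qed.

End Comb.

Lemma wt_sum (R : realFieldType) (I : finType) (l g : I -> R) :
  (forall i, 0 <= l i) -> \sum_i l i * g i <= 0 -> \sum_k wt l g k = \sum_i l i.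
Proof.
move=> l0 lg.
have := @wt_comb R R^o I l g (fun _ => 1) l0 lg.
under [RHS]eq_bigr do rewrite /GRing.scale /= mulr1.
move=> <-; apply: eq_bigr => -[i|[i j]] _ /=.
  by rewrite /GRing.scale /= mulr1.
have [h|h] := boolP ((0 < g i) && (g j < 0)).
  case/andP: h => hi hj; rewrite /GRing.scale /= !mulr1.
  have hd : g i - g j != 0 by rewrite subr_eq0; apply/negP => /eqP e; lra.
  by rewrite -mulrDl [- g j + _]addrC divff // mulr1.
by have := @wt_valid R I l g (inr (i, j)) h; rewrite /= => ->; rewrite scale0r.
Qed.

Section Cut.
Variable R : realFieldType.
Variable V : lmodType R.

Lemma hull_pt (I : finType) (P : I -> V) i : hull P (P i).
Proof.
exists (fun j => if j == i then 1 else 0); split; [|split].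
- by move=> j; case: (j == i).
- by rewrite (bigD1 i) //= eqxx big1 ?addr0 // => j /negbTE ->.
- by rewrite (bigD1 i) //= eqxx scale1r big1 ?addr0 // => j /negbTE ->; rewrite scale0r.
Qed.

Lemma hull_two (I : finType) (P : I -> V) i j a b :
  0 <= a -> 0 <= b -> a + b = 1 -> hull P (a *: P i + b *: P j).
Proof.
move=> ha hb hab.
exists (fun k => (if k == i then a else 0) + (if k == j then b else 0)); split; [|split].
- move=> k; apply: addr_ge0; [by case: (k == i)|by case: (k == j)].
- rewrite big_split /= (bigD1 i) //= eqxx big1 ?addr0; last by move=> k /negbTE ->.
  by rewrite (bigD1 j) //= eqxx big1 ?addr0 // => k /negbTE ->.
- under eq_bigr do rewrite scalerDl.
  rewrite big_split /= (bigD1 i) //= eqxx big1 ?addr0; last by move=> k /negbTE ->; rewrite scale0r.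
  by rewrite (bigD1 j) //= eqxx big1 ?addr0 // => k /negbTE ->; rewrite scale0r.
Qed.

Lemma hull_lin (I : finType) (P : I -> V) g x c :
  linf g -> (forall i, g (P i) <= c) -> hull P x -> g x <= c.
Proof.
move=> hg hP [l [l0 [l1 ->]]]; rewrite linf_sum //.
rewrite -[c]mul1r -l1 mulr_suml; apply: ler_sum => i _.
by apply: ler_wpM2l.
Qed.

Lemma cut (I : finType) (P : I -> V) (g : V -> R) : linf g ->
  exists (J : finType) (Q : J -> V), forall x, (hull P x /\ g x <= 0) <-> hull Q x.
Proof.
move=> hg.
pose G i := g (P i).
pose valid (k : I + I * I) := match k with inl i => G i <= 0
   | inr (i, j) => (0 < G i) && (G j < 0) end.
have fwd : forall x, hull P x -> g x <= 0 -> exists l, (forall i, 0 <= l i) /\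
    \sum_i l i * G i <= 0 /\ \sum_i l i = 1 /\ x = \sum_i l i *: P i.
  move=> x [l [l0 [l1 ->]]] hx; exists l; split=> //; split=> //.
  by rewrite -linf_sum.
case: (boolP [exists i, G i <= 0]) => [/existsP [i0 hi0]|hno].
- exists (I + I * I)%type, (fun k => if valid k then pt G P k else P i0) => x; split.
  + case=> hP hgx; have [l [l0 [lg [l1 ->]]]] := fwd x hP hgx.
    exists (wt l G); split; [exact: wt_ge0|split].
      by rewrite wt_sum.
    rewrite -(wt_comb P l0 lg); apply: eq_bigr => k _.
    by case: (boolP (valid k)) => // hk; rewrite (@wt_valid R I l G k hk) !scale0r.
  + move=> hx; split.
      apply: hull_comb hx => k; case: (boolP (valid k)) => hk; last exact: hull_pt.
      case: k hk => [i|[i j]] /= hk; first exact: hull_pt.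
      case/andP: hk => hi hj; apply: hull_two.
      * rewrite divr_ge0 //; lra.
      * rewrite divr_ge0 //; lra.
      * rewrite -mulrDl [- G j + _]addrC divff //.
        rewrite subr_eq0; apply/negP => /eqP e; lra.
    apply: hull_lin hx => // k; case: (boolP (valid k)) => hk //.
    case: k hk => [i|[i j]] //= /andP [hi hj].
    rewrite linfD // !linfZ // -/(G i) -/(G j).
    rewrite mulrAC [X in _ + X]mulrAC -mulrDl.
    have -> : - G j * G i + G i * G j = 0 by ring.
    by rewrite mul0r.
- exists 'I_0, (fun _ => 0) => x; split.
  + case=> hP hgx; have [l [l0 [lg [l1 _]]]] := fwd x hP hgx.
    have : \sum_k wt l G k = 0.
      apply: big1 => k _; apply: wt_valid; case: k => [i|[i j]] /=.
        by apply: contra hno => h'; apply/existsP; exists i.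
      apply/negP => /andP [_ hj]; move/negP: hno; apply; apply/existsP; exists j.
      exact: ltW.
    by rewrite wt_sum // l1 => /eqP; rewrite oner_eq0.
  + by case=> l [_ [+ _]]; rewrite big_ord0 => /eqP; rewrite eq_sym oner_eq0.
Qed.

End Cut.

Lemma sum_enum (R : nmodType) (I : finType) (F : I -> R) :
  \sum_i F i = \sum_(i < #|I|) F (enum_val i).
Proof. rewrite -big_enum_val; apply: eq_bigl => i; by rewrite inE. Qed.

Section Enum.
Variable R : realFieldType.
Variable V : lmodType R.

Lemma hull_enum (I : finType) (P : I -> V) x :
  hull P x <-> hull (fun i : 'I_#|I| => P (enum_val i)) x.
Proof.
split.
  case=> l [l0 [l1 ->]]; exists (fun i => l (enum_val i)); split=> //; split.
    by rewrite -(sum_enum l).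
  exact: (sum_enum (fun i => l i *: P i)).
case=> l [l0 [l1 ->]]; exists (fun i => l (enum_rank i)); split=> //; split.
  rewrite (sum_enum (fun i => l (enum_rank i))) -l1; apply: eq_bigr => i _.
  by rewrite enum_valK.
rewrite (sum_enum (fun i => l (enum_rank i) *: P i)); apply: eq_bigr => i _.
by rewrite enum_valK.
Qed.

Lemma cvx_lo (I : finType) (l F : I -> R) c :
  (forall i, 0 <= l i) -> \sum_i l i = 1 -> (forall i, c <= F i) -> c <= \sum_i l i * F i.
Proof.
move=> l0 l1 h; apply: (@le_trans _ _ (\sum_i l i * c)).
  by rewrite -mulr_suml l1 mul1r.
by apply: ler_sum => i _; apply: ler_wpM2l.
Qed.

End Enum.

Section Cuts.
Variable R : realFieldType.
Variable V : lmodType R.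

Fixpoint allneg (gs : seq (V -> R)) (x : V) : Prop :=
  match gs with [::] => True | g :: gs' => g x <= 0 /\ allneg gs' x end.
Fixpoint alllin (gs : seq (V -> R)) : Prop :=
  match gs with [::] => True | g :: gs' => linf g /\ alllin gs' end.

Lemma cuts (I : finType) (P : I -> V) gs : alllin gs ->
  exists (J : finType) (Q : J -> V), forall x, (hull P x /\ allneg gs x) <-> hull Q x.
Proof.
elim: gs => [|g gs IH] /= => [_|[hg hgs]].
  by exists I, P => x; split; [case|].
have [J [Q hQ]] := IH hgs.
have [J' [Q' hQ']] := cut Q hg.
exists J', Q' => x; rewrite -hQ' -hQ; tauto.
Qed.

Lemma alllin_map (A : Type) (F : A -> V -> R) s : (forall a, linf (F a)) -> alllin (map F s).
Proof. by move=> h; elim: s => //= a s ->; split. Qed.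

Lemma allneg_map (A : eqType) (F : A -> V -> R) s x :
  allneg (map F s) x <-> forall a, a \in s -> F a x <= 0.
Proof.
elim: s => [|a s IH] /=; first by split.
rewrite IH; split.
  by case=> h1 h2 b; rewrite inE => /orP [/eqP ->|]; [|apply: h2].
by move=> h; split; [apply: h; rewrite inE eqxx|move=> b hb; apply: h; rewrite inE hb orbT].
Qed.

End Cuts.


Lemma topk (R : realDomainType) D (z : 'I_D -> R) (rho : 'I_D -> 'I_D) (e : nat) :
  (forall d f : 'I_D, (d <= f)%N -> z f <= z d) -> injective rho ->
  \sum_(d : 'I_D | (d <= e)%N) z (rho d) <= \sum_(d : 'I_D | (d <= e)%N) z d.
Proof.
move=> hz inj.
set I := [set d : 'I_D | (d <= e)%N].
have -> : \sum_(d : 'I_D | (d <= e)%N) z d = \sum_(d in I) z d.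
  by apply: eq_bigl => d; rewrite inE.
have -> : \sum_(d : 'I_D | (d <= e)%N) z (rho d) = \sum_(d in I) z (rho d).
  by apply: eq_bigl => d; rewrite inE.
rewrite -(big_imset _ (in2W inj)) /=.
set B := rho @: I.
rewrite (big_setID I) [X in _ <= X](big_setID B) /= setIC lerD2l.
have hc : #|B :\: I| = #|I :\: B|.
  have h1 := cardsID I B; have h2 := cardsID B I.
  have h3 : #|B| = #|I| by rewrite card_imset.
  rewrite setIC in h2; lia.
have key : forall i j, j \in B :\: I -> i \in I :\: B -> z j <= z i.
  move=> i j; rewrite !inE => /andP [hj _] /andP [_ hi]; apply: hz; lia.
have h1 : (\sum_(j in B :\: I) z j) *+ #|I :\: B| <= (\sum_(i in I :\: B) z i) *+ #|B :\: I|.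
  rewrite -!sumr_const [X in _ <= X]exchange_big /=.
  apply: ler_sum => i hi; apply: ler_sum => j hj; exact: key.
case: (posnP #|I :\: B|) => hm.
  move: (hm); rewrite -hc => hm'.
  move/eqP: hm; rewrite cards_eq0 => /eqP ->.
  by move/eqP: hm'; rewrite cards_eq0 => /eqP ->; rewrite !big_set0.
by move: h1; rewrite hc ler_pMn2r.
Qed.

Definition Wn (R : pzRingType) D (w : 'I_D -> R) (n : nat) : R := \sum_(d < D | val d == n) w d.

Lemma Wn_ord (R : pzRingType) D (w : 'I_D -> R) (d : 'I_D) : Wn w d = w d.
Proof. by rewrite /Wn (big_pred1 d). Qed.

Lemma Wn_D (R : pzRingType) D (w : 'I_D -> R) : Wn w D = 0.
Proof. by rewrite /Wn big_pred0 // => i /=; rewrite ltn_eqF. Qed.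

Lemma abel (R : comPzRingType) D (w a : 'I_D -> R) :
  \sum_d w d * a d = \sum_(e < D) (w e - Wn w e.+1) * \sum_(d : 'I_D | (d <= e)%N) a d.
Proof.
under [RHS]eq_bigr do rewrite mulr_sumr.
rewrite (exchange_big_dep xpredT) //=.
apply: eq_bigr => d _; rewrite -mulr_suml; congr (_ * _).
under eq_bigr do rewrite -Wn_ord.
rewrite (eq_bigl (fun e : 'I_D => true && (d <= e)%N)) //.
rewrite -(big_geq_mkord d D xpredT (fun e => Wn w e - Wn w e.+1)).
rewrite (telescope_sumr_eq (fun n => - Wn w n)) ?Wn_D ?Wn_ord.
- by rewrite oppr0 sub0r opprK.
- exact: ltnW.
- by move=> k _; rewrite opprK addrC.
Qed.

Lemma Wn_ge (R : pzRingType) D (w : 'I_D -> R) n : (D <= n)%N -> Wn w n = 0.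
Proof. by move=> h; rewrite /Wn big_pred0 // => i /=; rewrite ltn_eqF // (leq_trans _ h). Qed.

Lemma rearr (R : realDomainType) D (w z : 'I_D -> R) (rho : 'I_D -> 'I_D) :
  (forall d f : 'I_D, (d <= f)%N -> z f <= z d) ->
  (forall d f : 'I_D, (d <= f)%N -> w f <= w d) -> (forall d, 0 <= w d) ->
  injective rho ->
  \sum_d w d * z (rho d) <= \sum_d w d * z d.
Proof.
move=> hz hw hw0 inj; rewrite (abel w (fun d => z (rho d))) (abel w z); apply: ler_sum => e _; apply: ler_wpM2l.
  case: (ltnP e.+1 D) => h.
    by rewrite -[e.+1]/(val (Ordinal h)) Wn_ord subr_ge0 hw.
  by rewrite Wn_ge // subr0.
exact: topk.
Qed.

Section GGIsort.
Variable R : realType.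
Variable D : nat.
Variable x : 'cV[R]_D.
Definition srt := sort (fun a b : R => b <= a) [seq x i 0 | i <- enum 'I_D].

Lemma srt_perm : exists tau : 'S_D, forall d : 'I_D, nth 0 srt d = x (tau d) 0.
Proof.
pose t := [tuple x i 0 | i < D].
have : perm_eq srt t.
  by rewrite /srt /t /= perm_sort.
case/perm.tuple_permP => p hp; exists p => d.
by rewrite hp -tnth_nth tnth_mktuple tnth_mktuple.
Qed.

Lemma srt_dec (d f : 'I_D) : (d <= f)%N -> nth 0 srt f <= nth 0 srt d.
Proof.
move=> h.
have hs : sorted (fun a b : R => b <= a) srt.
  by apply: sort_sorted => a b; rewrite le_total.
have sz : size srt = D by rewrite /srt size_sort size_map size_enum_ord.
apply: (sorted_leq_nth _ _ 0 hs).
- by move=> a b c hab hbc; apply: le_trans hbc hab.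
- by move=> a.
all: by rewrite ?inE ?sz.
Qed.
End GGIsort.

Lemma ggi_max (R : realType) D (w : 'I_D -> R) (x : 'cV[R]_D) :
  (forall d f : 'I_D, (d <= f)%N -> w f <= w d) -> (forall d, 0 <= w d) ->
  (exists tau : 'S_D, GGI w x = \sum_d w d * x (tau d) 0) /\
  (forall sg : 'S_D, \sum_d w d * x (sg d) 0 <= GGI w x).
Proof.
move=> hw hw0; have [tau ht] := srt_perm x.
have eG : GGI w x = \sum_d w d * x (tau d) 0.
  by rewrite /GGI; apply: eq_bigr => d _; rewrite -ht.
split; first by exists tau.
move=> sg; rewrite eG.
have -> : \sum_d w d * x (sg d) 0 = \sum_d w d * x (tau ((sg * tau^-1)%g d)) 0.
  by apply: eq_bigr => d _; rewrite permM permKV.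
apply: (rearr (z := fun d => x (tau d) 0)) => //.
  by move=> d f h; rewrite -!ht; apply: srt_dec.
exact: perm_inj.
Qed.


Section Norms.
Variables (R : realType) (K : nat).
Definition N1 (v : 'cV[R]_K) : R := \sum_k `|v k 0|.

Lemma N1_ge0 v : 0 <= N1 v.
Proof. by apply: sumr_ge0 => k _. Qed.

Lemma N1_0 : N1 0 = 0.
Proof. by rewrite /N1 big1 // => k _; rewrite mxE normr0. Qed.

Lemma N1_comb (J : finType) (l : J -> R) (u : J -> 'cV[R]_K) :
  (forall j, 0 <= l j) -> N1 (\sum_j l j *: u j) <= \sum_j l j * N1 (u j).
Proof.
move=> l0; rewrite /N1.
under [X in _ <= X]eq_bigr do rewrite mulr_sumr.
rewrite [X in _ <= X]exchange_big /=; apply: ler_sum => k _.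
rewrite summxE; apply: le_trans (ler_norm_sum _ _ _) _.
apply: ler_sum => j _; rewrite mxE normrM ger0_norm //.
Qed.

Lemma enorm_le v : enorm v <= N1 v.
Proof.
rewrite /enorm -[X in _ <= X]ger0_norm ?N1_ge0 // -sqrtr_sqr ler_sqrt ?sqr_ge0 //.
rewrite /N1 expr2 mulr_suml; apply: ler_sum => k _.
rewrite -(real_normK (num_real (v k 0))) expr2; apply: ler_wpM2l => //.
rewrite (bigD1 k) //= lerDl; by apply: sumr_ge0.
Qed.

Lemma enorm_gt0 (v : 'cV[R]_K) : v != 0 -> 0 < enorm v.
Proof.
move=> hv; rewrite /enorm sqrtr_gt0.
have [k hk] : exists k, v k 0 != 0.
  apply/existsP; apply: contraR hv; rewrite negb_exists => /forallP h.
  apply/eqP/matrixP => i j; rewrite (ord1 j) mxE; exact/eqP/negPn/h.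
rewrite (bigD1 k) //=; apply: ltr_wpDr; first by apply: sumr_ge0 => i _; apply: sqr_ge0.
by rewrite -(real_normK (num_real (v k 0))) exprn_gt0 // normr_gt0.
Qed.
End Norms.


Section Main.
Variables (R : realType) (D K : nat) (mu : 'M[R]_(D, K)) (w : 'I_D -> R).
Hypothesis hmu : forall i j, 0 <= mu i j <= 1.
Hypothesis hw : forall d, 0 <= w d <= 1.
Hypothesis hwdec : forall d e : 'I_D, (d < e)%N -> w e < w d.

Definition ell (s : 'S_D) (x : 'cV[R]_K) := \sum_d w d * (mu *m x) (s d) 0.
Local Notation f := (ggi_obj w mu).

Lemma ell_lin s a u v : ell s (a *: u + v) = a * ell s u + ell s v.
Proof.
rewrite /ell.
transitivity (\sum_d (a * (w d * (mu *m u) (s d) 0) + w d * (mu *m v) (s d) 0)).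
  by apply: eq_bigr => d _; rewrite mulmxDr -scalemxAr !mxE; ring.
by rewrite big_split /= mulr_sumr.
Qed.

Lemma wdec (d e : 'I_D) : (d <= e)%N -> w e <= w d.
Proof.
rewrite leq_eqVlt => /orP [/eqP h|h]; last exact: ltW (hwdec h).
by have -> : e = d by apply: val_inj.
Qed.

Lemma F1 x : exists tau, f x = ell tau x.
Proof.
have [[tau ht] _] := ggi_max (mu *m x) wdec (fun d => proj1 (andP (hw d))).
by exists tau.
Qed.

Lemma F2 x s : ell s x <= f x.
Proof.
have [_ h] := ggi_max (mu *m x) wdec (fun d => proj1 (andP (hw d))).
exact: h.
Qed.

Lemma ell_bnd x s : simplex x -> 0 <= ell s x <= D%:R.
Proof.
case=> x0 x1.
have hy : forall i, 0 <= (mu *m x) i 0 <= 1.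
  move=> i; rewrite mxE; apply/andP; split.
    apply: sumr_ge0 => k _; apply: mulr_ge0 => //; by case/andP: (hmu i k).
  rewrite -x1; apply: ler_sum => k _; rewrite -[X in _ <= X]mul1r.
  by apply: ler_wpM2r => //; case/andP: (hmu i k).
apply/andP; split.
  apply: sumr_ge0 => d _; apply: mulr_ge0; [by case/andP: (hw d)|by case/andP: (hy (s d))].
have -> : D%:R = \sum_(d < D) (1 : R) by rewrite sumr_const card_ord.
apply: ler_sum => d _; rewrite -[X in _ <= X]mul1r.
case/andP: (hw d) => h1 h2; case/andP: (hy (s d)) => h3 h4.
by apply: ler_pM.
Qed.

Lemma f_bnd x : simplex x -> 0 <= f x <= D%:R.
Proof. by move=> hx; have [tau ->] := F1 x; apply: ell_bnd. Qed.

Local Notation V := 'cV[R]_(K + 1).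
Definition lft (x : 'cV[R]_K) (t : R) : V := col_mx x t%:M.
Definition sndv (v : V) : R := dsubmx v 0 0.

Lemma lftK1 x t : usubmx (lft x t) = x.
Proof. by rewrite /lft col_mxKu. Qed.
Lemma lftK2 x t : sndv (lft x t) = t.
Proof. by rewrite /sndv /lft col_mxKd mxE. Qed.
Lemma lft_eta v : lft (usubmx v) (sndv v) = v.
Proof. by rewrite /lft /sndv -mx11_scalar vsubmxK. Qed.

Lemma usub_comb (J : finType) (l : J -> R) (v : J -> V) :
  usubmx (\sum_j l j *: v j) = \sum_j l j *: usubmx (v j).
Proof. by rewrite linear_sum; apply: eq_bigr => j _; rewrite linearZ. Qed.

Lemma snd_comb (J : finType) (l : J -> R) (v : J -> V) :
  sndv (\sum_j l j *: v j) = \sum_j l j * sndv (v j).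
Proof.
rewrite /sndv linear_sum summxE; apply: eq_bigr => j _; by rewrite linearZ mxE.
Qed.

Lemma lft_comb (J : finType) (l : J -> R) (x : J -> 'cV[R]_K) (t : J -> R) :
  \sum_j l j *: lft (x j) (t j) = lft (\sum_j l j *: x j) (\sum_j l j * t j).
Proof.
rewrite -[LHS]lft_eta usub_comb snd_comb.
by congr lft; apply: eq_bigr => j _; rewrite ?lftK1 ?lftK2.
Qed.

Definition gs (s : 'S_D) (v : V) : R := ell s (usubmx v) - sndv v.

Lemma gs_lin s : linf (gs s).
Proof.
move=> a u v; rewrite /gs linearP ell_lin /=.
have -> : sndv (a *: u + v) = a * sndv u + sndv v.
  by rewrite /sndv linearP !mxE.
ring.
Qed.

Definition pts0 (kb : 'I_K * bool) : V :=
  lft (delta_mx kb.1 0) (if kb.2 then D%:R else -1).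

Lemma P0a v : hull pts0 v -> simplex (usubmx v) /\ -1 <= sndv v <= D%:R.
Proof.
case=> l [l0 [l1 ->]]; rewrite /pts0 lft_comb lftK1 lftK2.
have e1 : forall k, (\sum_j l j *: (delta_mx j.1 0 : 'cV[R]_K)) k 0 =
    \sum_j (if j.1 == k then l j else 0).
  move=> k; rewrite summxE; apply: eq_bigr => j _; rewrite !mxE eqxx andbT eq_sym.
  by case: (j.1 == k); rewrite ?mulr1 ?mulr0.
split; first split.
- move=> k; rewrite e1; apply: sumr_ge0 => j _; by case: (j.1 == k).
- under eq_bigr do rewrite e1.
  rewrite exchange_big /= -l1; apply: eq_bigr => j _.
  rewrite (bigD1 j.1) //= eqxx big1 ?addr0 //.
  by move=> k; rewrite eq_sym => /negbTE ->.
- have hD : (0 : R) <= D%:R := ler0n _ _.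
  have lo : forall (c : R) F, (forall j, c <= F j) -> c <= \sum_j l j * F j.
    move=> c F h; apply: (@le_trans _ _ (\sum_j l j * c)).
      by rewrite -mulr_suml l1 mul1r.
    by apply: ler_sum => j _; apply: ler_wpM2l.
  have hi : forall (c : R) F, (forall j, F j <= c) -> \sum_j l j * F j <= c.
    move=> c F h; apply: (@le_trans _ _ (\sum_j l j * c)).
      by apply: ler_sum => j _; apply: ler_wpM2l.
    by rewrite -mulr_suml l1 mul1r.
  apply/andP; split.
  + by apply: lo => j; case: j.2 => //; lra.
  + by apply: hi => j; case: j.2 => //; lra.
Qed.

Lemma P0b x t : simplex x -> -1 <= t <= D%:R -> hull pts0 (lft x t).
Proof.
case=> x0 x1 /andP [t0 t1].
have hD : (0 : R) <= D%:R := ler0n _ _.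
have hD1 : (D%:R + 1 : R) != 0 by rewrite gt_eqF //; lra.
pose a := (t + 1) / (D%:R + 1); pose b := (D%:R - t) / (D%:R + 1).
have ab : a + b = 1 by rewrite /a /b; field.
have abt : a * D%:R + b * -1 = t by rewrite /a /b; field.
exists (fun kb : 'I_K * bool => x kb.1 0 * (if kb.2 then a else b)); split; [|split].
- move=> [k c] /=; apply: mulr_ge0 => //; case: c; apply: divr_ge0; lra.
- rewrite -(pair_bigA _ (fun k c => x k 0 * (if c then a else b))) /= -x1; apply: eq_bigr => k _.
  by rewrite big_bool /= -mulrDr ab mulr1.
- rewrite /pts0 lft_comb; congr lft.
  + rewrite -(pair_bigA _ (fun k c => (x k 0 * (if c then a else b)) *: (delta_mx k 0 : 'cV[R]_K))) /= [in LHS](matrix_sum_delta x); apply: eq_bigr => k _.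
    by rewrite big_bool big_ord1 /= -scalerDl -mulrDr ab mulr1.
  + rewrite -(pair_bigA _ (fun k c => x k 0 * (if c then a else b) * (if c then D%:R else -1))) /=; under eq_bigr do rewrite big_bool /=.
    rewrite (eq_bigr (fun i => x i 0 * t)); last by move=> i _; rewrite -abt; ring.
    by rewrite -mulr_suml x1 mul1r.
Qed.

Lemma Qex : exists (J : finType) (q : J -> V),
  forall v, hull q v <-> (hull pts0 v /\ forall s, gs s v <= 0).
Proof.
have hl : alllin (map gs (enum {perm 'I_D})) := alllin_map _ gs_lin.
have [J [q hq]] := cuts pts0 hl.
exists J, q => v; rewrite -hq allneg_map; split.
  by case=> h1 h2; split=> // s; apply: h2; rewrite mem_enum.
by case=> h1 h2; split=> // s _; apply: h2.
Qed.

Section Final.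
Variables (J : finType) (q : J -> V).
Hypothesis hq : forall v, hull q v <-> (hull pts0 v /\ forall s, gs s v <= 0).

Lemma Q1 v : hull q v -> simplex (usubmx v) /\ f (usubmx v) <= sndv v.
Proof.
move/hq => [/P0a [hs _] hg]; split=> //; have [tau ->] := F1 (usubmx v).
by have := hg tau; rewrite /gs subr_le0.
Qed.

Lemma Q2 x : simplex x -> hull q (lft x (f x)).
Proof.
move=> hx; apply/hq; split.
  apply: P0b => //; case/andP: (f_bnd hx) => h1 h2; apply/andP; split => //; lra.
by move=> s; rewrite /gs lftK1 lftK2 subr_le0; exact: F2.
Qed.

Lemma final_res : convex_polytope (argmin_set w mu) /\
  exists g : R, 0 < g /\
    forall a : 'cV[R]_K, simplex a -> ~ argmin_set w mu a ->
      exists2 a' : 'cV[R]_K, argmin_set w mu a' &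
        g <= (ggi_obj w mu a - ggi_obj w mu a') / enorm (a - a').
Proof.
case: (pickP (fun _ : J => true)) => [j0 _|hJ]; last first.
  have ns : forall x : 'cV[R]_K, ~ simplex x.
    move=> x hx; have [l [_ [l1 _]]] := Q2 hx; move: l1; rewrite big1.
      by move=> /eqP; rewrite eq_sym oner_eq0.
    by move=> j _; have := hJ j.
  split.
    exists 0, (fun _ => 0) => x; split; first by case=> /ns.
    by case=> l [_ [+ _]]; rewrite big_ord0 => /eqP; rewrite eq_sym oner_eq0.
  by exists 1; split => // a /ns.
case: (@arg_minP _ _ J j0 xpredT (fun j => sndv (q j)) isT) => i0 _ hi0.
set m := sndv (q i0).
pose p' j := if sndv (q j) == m then usubmx (q j) else usubmx (q i0).
have hqi0 := Q1 (hull_pt q i0).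
have lowm : forall b, simplex b -> m <= f b.
  move=> b hb; have [l [l0 [l1 e]]] := Q2 hb; have := congr1 sndv e.
  rewrite lftK2 snd_comb => ->; apply: cvx_lo => // j; exact: hi0.
have lq : forall j, hull q (lft (p' j) m).
  move=> j; rewrite /p'; case: eqP => [<-|_]; rewrite ?lft_eta; first exact: hull_pt.
  exact: hull_pt.
have clA : forall x, hull p' x -> argmin_set w mu x /\ f x <= m.
  move=> x hx.
  have : hull q (lft x m).
    case: hx => l [l0 [l1 ex]].
    have -> : lft x m = \sum_j l j *: lft (p' j) m.
      by rewrite lft_comb -mulr_suml l1 mul1r ex.
    apply: (hull_comb lq); exists l; split=> //.
  move/Q1; rewrite lftK1 lftK2 => -[hs hf]; split=> //; split=> // b hb.
  exact: le_trans hf (lowm b hb).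
have sndx : forall x l, lft x (f x) = \sum_j l j *: q j ->
    f x = \sum_j l j * sndv (q j).
  by move=> x l e; have := congr1 sndv e; rewrite lftK2 snd_comb.
have usx : forall x l, lft x (f x) = \sum_j l j *: q j ->
    x = \sum_j l j *: usubmx (q j).
  by move=> x l e; have := congr1 (@usubmx _ K 1 1) e; rewrite lftK1 usub_comb.
have dif : forall x l, lft x (f x) = \sum_j l j *: q j -> \sum_j l j = 1 ->
    f x - m = \sum_j l j * (sndv (q j) - m).
  move=> x l e l1; rewrite (sndx x l e).
  under [RHS]eq_bigr do rewrite mulrBr.
  by rewrite sumrB -mulr_suml l1 mul1r.
have clB : forall x, argmin_set w mu x -> hull p' x.
  move=> x [hs hmin]; have [l [l0 [l1 e]]] := Q2 hs.
  have hfx : f x <= m := le_trans (hmin _ hqi0.1) hqi0.2.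
  have hz : forall j, l j * (sndv (q j) - m) = 0.
    move=> j; have h0 : forall j, true -> 0 <= l j * (sndv (q j) - m).
      by move=> k _; apply: mulr_ge0 => //; rewrite subr_ge0 hi0.
    apply: (@psumr_eq0P _ _ _ _ h0) => //.
    apply/eqP; rewrite eq_le; apply/andP; split; last by apply: sumr_ge0.
    by rewrite -(dif x l e l1) subr_le0.
  exists l; split=> //; split=> //.
  rewrite (usx x l e); apply: eq_bigr => j _; rewrite /p'; case: eqP => // hne.
  have := hz j; move/eqP; rewrite mulf_eq0 subr_eq0 => /orP [/eqP -> |/eqP //].
  by rewrite !scale0r.
split.
  exists #|J|, (fun i => p' (enum_val i)) => x; split.
    by move=> h; exact: (proj1 (hull_enum p' x) (clB x h)).
  by move=> h; exact: (clA x (proj2 (hull_enum p' x) h)).1.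
pose hh j := if sndv (q j) == m then 1 else sndv (q j) - m.
have hh0 : forall j, 0 < hh j.
  move=> j; rewrite /hh; case: eqP => // ne; rewrite subr_gt0 lt_neqAle (hi0 j isT) andbT.
  by apply/eqP => e; apply: ne; rewrite e.
case: (@arg_minP _ _ J j0 xpredT hh isT) => j1 _ hj1.
pose dl := hh j1.
pose M := 1 + \sum_j N1 (usubmx (q j) - usubmx (q i0)).
have M0 : 0 < M.
  rewrite /M ltr_pwDl //; apply: sumr_ge0 => j _; exact: N1_ge0.
exists (dl / M); split; first by rewrite divr_gt0 // hh0.
move=> x hx hnx; have [l [l0 [l1 e]]] := Q2 hx.
pose a' := \sum_j l j *: p' j.
have [ha' hfa'] : argmin_set w mu a' /\ f a' <= m by apply: clA; exists l.
exists a' => //.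
pose ind j : R := if sndv (q j) == m then 0 else 1.
pose S := \sum_j l j * ind j.
have i1 : dl * S <= f x - m.
  rewrite (dif x l e l1) /S mulr_sumr; apply: ler_sum => j _.
  rewrite mulrCA; apply: ler_wpM2l => //; rewrite /ind.
  case: eqP => [->|ne]; first by rewrite mulr0 subrr.
  rewrite mulr1; apply: le_trans (hj1 j isT) _; rewrite /hh; case: eqP => // e'; by case: ne.
have i2 : enorm (x - a') <= M * S.
  apply: le_trans (enorm_le _) _.
  have -> : x - a' = \sum_j l j *: (usubmx (q j) - p' j).
    by rewrite [in LHS](usx x l e) /a' -sumrB; apply: eq_bigr => k _; rewrite scalerBr.
  apply: le_trans (N1_comb _ l0) _.
  rewrite /S mulr_sumr; apply: ler_sum => j _; rewrite mulrCA; apply: ler_wpM2l => //.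
  rewrite /ind /p'; case: eqP => _.
    by rewrite subrr N1_0 mulr0.
  rewrite mulr1 /M (bigD1 j) //= addrCA lerDl addr_ge0 //; apply: sumr_ge0 => k _.
  exact: N1_ge0.
have hne : x - a' != 0.
  apply/eqP => h; apply: hnx; have -> : x = a' by apply/eqP; rewrite -subr_eq0 h.
  exact: ha'.
have hpos := enorm_gt0 hne.
rewrite ler_pdivlMr //.
apply: (@le_trans _ _ (dl * S)).
  rewrite -mulrA ler_pM2l; last by apply: hh0.
  by rewrite ler_pdivrMl // mulrC.
apply: le_trans i1 _; lra.
Qed.

End Final.
End Main.

Unset Implicit Arguments.

Theorem lemma3 (R : realType) (D K : nat) (mu : 'M[R]_(D, K)) (w : 'I_D -> R)
  (hmu : forall i j, 0 <= mu i j <= 1)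
  (hw : forall d, 0 <= w d <= 1)
  (hwdec : forall d e : 'I_D, (d < e)%N -> w e < w d) :
  convex_polytope (argmin_set w mu) /\
  exists g : R, 0 < g /\
    forall a : 'cV[R]_K, simplex a -> ~ argmin_set w mu a ->
      exists2 a' : 'cV[R]_K, argmin_set w mu a' &
        g <= (ggi_obj w mu a - ggi_obj w mu a') / enorm (a - a').
Proof.
have [J [q hq]] := Qex mu w.
exact: (final_res hmu hw hwdec hq).
Qed.
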